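(* Let $p,p'$ be two POPs of size $k$ having the same set of isolated vertices $I=\{i_1<i_2<\dots<i_s\}$ (with $s\ge 1$). Suppose that for every $x\in [i_1,k]\setminus I$ and every $y\in[i_1-1]$ we have $y<_p x$ and $y<_{p'}x$. Let $I_p,I_{p'}$ be the subposets of $p,p'$ induced by the labels $[i_1-1]$, and let $J_p,J_{p'}$ be the subposets of $p,p'$ induced by the labels $[i_1,k]\setminus I$. If $I_p\sim_s I_{p'}$ and $J_p=J_{p'}$ (as labeled posets), then $p\sim p'$.
   Context: A partially ordered pattern (POP) $p$ of size $k$ is a partial order $\le_p$ on the label set $[k]=\{1,\dots,k\}$. A permutation $\pi=\pi_1\cdots\pi_n\in\mathfrak S_n$ contains $p$ if there are indices $i_1<\dots<i_k$ such that $\pi_{i_j}<\pi_{i_m}$ whenever $j<_p m$; otherwise $\pi$ avoids $p$. $\mathfrak S_n(p)$ denotes the set of permutations in $\mathfrak S_n$ avoiding $p$. Two POPs $p,q$ are Wilf-equivalent, $p\sim q$, if $|\mathfrak S_n(p)|=|\mathfrak S_n(q)|$ for all $n\ge1$. A vertex (label) of $p$ is isolated if it is comparable to no other vertex. For $[a,b]=\{a,a+1,\dots,b\}$. A subposet induced by a set of labels keeps the order restricted to those labels (when the labels are $[r]$ it is a POP of size $r$). A Ferrers board $\lambda=(\lambda_1\ge\lambda_2\ge\dots\ge\lambda_n>0)$ with $\lambda_1=n$ is drawn in French notation: rows are numbered $1,\dots,n$ from bottom to top, columns from left to right, and row $i$ consists of the cells $(i,1),\dots,(i,\lambda_i)$.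 A transversal of $\lambda$ is a $0/1$-filling of its cells with exactly one $1$ in each row and each column. A transversal $T$ contains a POP $p$ of size $m$ if there are rows $r_1<\dots<r_m$ and columns $c_1<\dots<c_m$ such that every cell $(r_a,c_b)$ lies in $\lambda$, and for each $b$ the $1$ of column $c_b$ lies in row $r_{\sigma(b)}$ for some $\sigma(b)\in[m]$ (so $\sigma$ is a permutation), with $\sigma(j)<\sigma(m')$ whenever $j<_p m'$; otherwise $T$ avoids $p$. Two POPs $p,q$ are shape-Wilf-equivalent, $p\sim_s q$, if for every Ferrers board $\lambda$ the number of transversals of $\lambda$ avoiding $p$ equals the number avoiding $q$. *)

(* Defs.v *)
From mathcomp Require Import all_boot all_fingroup.
Set Implicit Arguments. Unset Strict Implicit. Unset Printing Implicit Defensive.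

(* A POP of size k: a strict partial order p on the labels 1..k (labels are
   natural numbers; p x y means x <_p y). *)
Definition is_pop (k : nat) (p : rel nat) : Prop :=
  [/\ forall x y, p x y -> (1 <= x <= k) && (1 <= y <= k),
      forall x, ~~ p x x &
      forall x y z, p x y -> p y z -> p x z].

Definition isolated (k : nat) (p : rel nat) (x : nat) : bool :=
  all (fun y => ~~ p x y && ~~ p y x) (iota 1 k).

Definition restrict (p : rel nat) (r : nat) : rel nat :=
  fun a b => [&& p a b, a <= r & b <= r].

(* pi contains the POP p of size k (label j+1 <-> position j of 'I_k) *)
Definition perm_contains (k n : nat) (p : rel nat) (s : 'S_n) : bool :=
  [exists f : {ffun 'I_k -> 'I_n},
    [forall a : 'I_k, forall b : 'I_k, (a < b) ==> (f a < f b)] &&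
    [forall a : 'I_k, forall b : 'I_k,
        p a.+1 b.+1 ==> (s (f a) < s (f b))]].

Definition perm_avoid_count (k n : nat) (p : rel nat) : nat :=
  #|[set s : 'S_n | ~~ perm_contains k p s]|.

Definition wilf_equiv (k : nat) (p q : rel nat) : Prop :=
  forall n, 1 <= n -> perm_avoid_count k n p = perm_avoid_count k n q.

(* Ferrers board lam = (lam_1 >= ... >= lam_n > 0), lam_1 = n,
   stored 0-based: row i+1 has length nth 0 lam i. *)
Definition ferrers (n : nat) (lam : seq nat) : Prop :=
  [/\ size lam = n, sorted geq lam, all (fun x => 0 < x) lam &
      nth 0 lam 0 = n].

Definition in_board (n : nat) (lam : seq nat) (r c : 'I_n) : bool :=
  c < nth 0 lam r.

(* a 0/1-filling is given by its set of cells containing a 1 *)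
Definition transversal (n : nat) (lam : seq nat) (T : {set 'I_n * 'I_n}) : bool :=
  [&& [forall rc in T, in_board lam rc.1 rc.2],
      [forall r : 'I_n, #|[set c : 'I_n | (r, c) \in T]| == 1] &
      [forall c : 'I_n, #|[set r : 'I_n | (r, c) \in T]| == 1]].

Definition trans_contains (m n : nat) (lam : seq nat) (p : rel nat)
    (T : {set 'I_n * 'I_n}) : bool :=
  [exists R : {ffun 'I_m -> 'I_n}, exists C : {ffun 'I_m -> 'I_n},
   exists sg : {ffun 'I_m -> 'I_m},
    [&& [forall a : 'I_m, forall b : 'I_m, (a < b) ==> (R a < R b)],
        [forall a : 'I_m, forall b : 'I_m, (a < b) ==> (C a < C b)],
        [forall a : 'I_m, forall b : 'I_m, in_board lam (R a) (C b)],
        [forall b : 'I_m, (R (sg b), C b) \in T] &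
        [forall a : 'I_m, forall b : 'I_m, p a.+1 b.+1 ==> (sg a < sg b)]]].

Definition trans_avoid_count (m n : nat) (lam : seq nat) (p : rel nat) : nat :=
  #|[set T : {set 'I_n * 'I_n} | transversal lam T && ~~ trans_contains m lam p T]|.

Definition shape_wilf_equiv (m : nat) (p q : rel nat) : Prop :=
  forall n (lam : seq nat), ferrers n lam ->
    trans_avoid_count m n lam p = trans_avoid_count m n lam q.

(* Main.v *)
Require Import Defs.
From mathcomp Require Import all_boot all_fingroup.
From Stdlib Require Import FunctionalExtensionality.
Set Implicit Arguments. Unset Strict Implicit. Unset Printing Implicit Defensive.

Section Senum.
Variables (N : nat) (A : {set 'I_N}).
Definition sen (i : 'I_#|A|) : 'I_N := enum_val i.
Lemma sen_in i : sen i \in A. Proof. exact: enum_valP. Qed.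
Lemma sen_sorted : sorted (fun x y : 'I_N => x < y) (enum A).
Proof.
rewrite /enum_mem -enumT; apply: sorted_filter; first by move=> x y z; apply: ltn_trans.
by rewrite -(sorted_map (f:=val) (e':=ltn)) val_enum_ord iota_ltn_sorted.
Qed.
Lemma sen_mono (i j : 'I_#|A|) : i < j -> sen i < sen j.
Proof.
move=> ij.
have H : forall x0, nth x0 (enum A) i < nth x0 (enum A) j.
  move=> x0; apply: (@sorted_ltn_nth _ (fun x y : 'I_N => x < y) _ x0 _ sen_sorted i j) => //.
  - by move=> x y z; apply: ltn_trans.
  - by rewrite inE -cardE ltn_ord.
  - by rewrite inE -cardE ltn_ord.
by rewrite /sen (enum_val_nth (enum_val i) j) {1}(enum_val_nth (enum_val i) i).
Qed.
Lemma sen_lt (i j : 'I_#|A|) : (sen i < sen j) = (i < j).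
Proof.
apply/idP/idP; last exact: sen_mono.
move=> h; rewrite ltnNge; apply/negP; rewrite leq_eqVlt => /orP [/eqP E | ji].
  by move: h; rewrite (val_inj E) ltnn.
by have := sen_mono ji; rewrite ltnNge (ltnW h).
Qed.
Lemma sen_le (i j : 'I_#|A|) : (sen i <= sen j) = (i <= j).
Proof. by rewrite leqNgt sen_lt -leqNgt. Qed.
Lemma sen_inj : injective sen.
Proof. exact: enum_val_inj. Qed.
Lemma sen_surj x : x \in A -> exists i, sen i = x.
Proof. move=> xA; exists (enum_rank_in xA x); exact: enum_rankK_in. Qed.
End Senum.

Definition W (q : rel nat) k m n (s : 'S_n) (c r : 'I_n) (f : {ffun 'I_k -> 'I_n}) : bool :=
  [&& [forall a : 'I_k, forall b : 'I_k, ((m <= a) && (a < b)) ==> (f a < f b)],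
      [forall a : 'I_k, (m <= a) ==> (c < f a)],
      [forall a : 'I_k, forall b : 'I_k, [&& m <= a, m <= b & q a.+1 b.+1] ==> (s (f a) < s (f b))] &
      [forall a : 'I_k, ((m <= a) && ~~ isolated k q a.+1) ==> (r < s (f a))]].

Arguments W : clear implicits.
Definition good q k m n (s : 'S_n) (c r : 'I_n) := [exists f, W q k m n s c r f].
Arguments good : clear implicits.

Section Stab.
Variables (q : rel nat) (k m n : nat).
Hypothesis Hq : is_pop k q.
Hypothesis mk : m < k.

Lemma nonisoL a b : q a b -> ~~ isolated k q a.
Proof.
case: Hq => rng _ _ qab; apply/negP => /allP /(_ b).
have /andP [/andP [_ _] /andP [b1 bk]] := rng _ _ qab.
by rewrite mem_iota b1 add1n ltnS bk qab => /(_ isT).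
Qed.

Lemma nonisoR a b : q a b -> ~~ isolated k q b.
Proof.
case: Hq => rng _ _ qab; apply/negP => /allP /(_ a).
have /andP [/andP [a1 ak] _] := rng _ _ qab.
by rewrite mem_iota a1 add1n ltnS ak qab andbF => /(_ isT).
Qed.

Let mo : 'I_k := Ordinal mk.

Lemma W_down s (c r c' r' : 'I_n) f : W q k m n s c r f -> c' <= c -> r' <= r -> W q k m n s c' r' f.
Proof.
case/and4P=> H1 H2 H3 H4 cc rr; apply/and4P; split => //.
  apply/forallP => a; apply/implyP => ma.
  by apply: leq_ltn_trans cc _; move/forallP/(_ a)/implyP/(_ ma): H2.
apply/forallP => a; apply/implyP => ma.
by apply: leq_ltn_trans rr _; move/forallP/(_ a)/implyP/(_ ma): H4.
Qed.

Lemma good_down s (c r c' r' : 'I_n) : good q k m n s c r -> c' <= c -> r' <= r -> good q k m n s c' r'.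
Proof. by case/existsP=> f Wf cc rr; apply/existsP; exists f; apply: W_down Wf cc rr. Qed.

Lemma beat s (c r : 'I_n) f : W q k m n s c r f ->
  (forall g, W q k m n s c r g -> g mo <= f mo) ->
  forall a : 'I_k, m <= a -> ~~ isolated k q a.+1 -> ~~ good q k m n s (f a) (s (f a)).
Proof.
move=> Wf fmax a ma na; apply/negP => /existsP [g Wg].
have Wg' : W q k m n s c r g.
  case/and4P: Wg => G1 G2 G3 G4; case/and4P: (Wf) => F1 F2 F3 F4.
  apply/and4P; split => //.
    apply/forallP => b; apply/implyP => mb.
    have := F2; move/forallP/(_ a)/implyP/(_ ma) => cfa.
    by apply: ltn_trans cfa _; move/forallP/(_ b)/implyP/(_ mb): G2.
  apply/forallP => b; apply/implyP => /andP [mb nb].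
  have := F4; move/forallP/(_ a); rewrite ma na /= => rfa.
  by apply: ltn_trans rfa _; move: G4 => /forallP/(_ b); rewrite mb nb.
have := fmax g Wg'.
case/and4P: Wg => _ G2 _ _; move/forallP/(_ mo): G2; rewrite /= leqnn /= => fg.
have : f mo <= f a.
  case/and4P: Wf => F1 _ _ _.
  case: (ltngtP mo a) => [oa|ao|/val_inj <-]; last by [].
    by apply: ltnW; move: F1 => /forallP/(_ mo)/forallP/(_ a); rewrite /= leqnn oa.
  by move: ao; rewrite /= ltnNge ma.
move=> h1 h2; have := leq_trans (leq_trans fg h2) h1.
by rewrite ltnn.
Qed.

Lemma trans_good (s s' : 'S_n) : (forall c, ~~ good q k m n s c (s c) -> s' c = s c) ->
  forall c r, good q k m n s c r -> good q k m n s' c r.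
Proof.
move=> H1 c r /existsP [f0 Wf0].
case: (@arg_maxnP _ f0 (W q k m n s c r) (fun f => f mo) Wf0) => f Wf fmax.
have E : forall a : 'I_k, m <= a -> ~~ isolated k q a.+1 -> s' (f a) = s (f a).
  by move=> a ma na; apply: (H1); exact: (beat Wf fmax ma na).
apply/existsP; exists f; case/and4P: Wf => F1 F2 F3 F4; apply/and4P; split => //.
  apply/forallP => a; apply/forallP => b; apply/implyP => /and3P [ma mb qab].
  rewrite E ?(nonisoL qab) // E ?(nonisoR qab) //.
  by move/forallP/(_ a)/forallP/(_ b): F3; rewrite ma mb qab.
apply/forallP => a; apply/implyP => /andP [ma na]; rewrite E //.
by move/forallP/(_ a): F4; rewrite ma na.
Qed.

Lemma stab (s s' : 'S_n) : (forall c, ~~ good q k m n s c (s c) -> s' c = s c) ->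
  (forall c, good q k m n s c (s c) -> good q k m n s c (s' c)) ->
  forall c r, good q k m n s' c r = good q k m n s c r.
Proof.
move=> H1 H2 c r; apply/idP/idP; last exact: trans_good.
case/existsP => f0 Wf0.
case: (@arg_maxnP _ f0 (W q k m n s' c r) (fun f => f mo) Wf0) => f Wf fmax.
have E : forall a : 'I_k, m <= a -> ~~ isolated k q a.+1 -> s' (f a) = s (f a).
  move=> a ma na; apply: (H1); apply/negP => gs.
  have := beat Wf fmax ma na; rewrite (trans_good H1) //; exact: H2.
apply/existsP; exists f; case/and4P: Wf => F1 F2 F3 F4; apply/and4P; split => //.
  apply/forallP => a; apply/forallP => b; apply/implyP => /and3P [ma mb qab].
  rewrite -E ?(nonisoL qab) // -E ?(nonisoR qab) //.
  by move/forallP/(_ a)/forallP/(_ b): F3; rewrite ma mb qab.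
apply/forallP => a; apply/implyP => /andP [ma na]; rewrite -E //.
by move/forallP/(_ a): F4; rewrite ma na.
Qed.

End Stab.

Lemma card_lt N (j : 'I_N) : #|[set j' : 'I_N | j' < j]| = j.
Proof.
have jN : j <= N by apply: ltnW.
have -> : [set j' : 'I_N | j' < j] = [set widen_ord jN x | x : 'I_j].
  apply/setP => x; rewrite inE; apply/idP/imsetP.
    by move=> xj; exists (Ordinal xj) => //; apply: val_inj.
  by case=> y _ ->; rewrite /= ltn_ord.
rewrite card_imset ?card_ord //.
by move=> x y /(congr1 val) /= E; apply: val_inj.
Qed.

Lemma initseg N (P : pred 'I_N) :
  (forall j j' : 'I_N, j' <= j -> P j -> P j') ->
  forall j : 'I_N, (j < #|[set j' | P j']|) = P j.
Proof.
move=> Pd j; apply/idP/idP => [lt|Pj].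
  apply/negPn/negP => nPj.
  have : [set j' | P j'] \subset [set j' : 'I_N | j' < j].
    apply/subsetP => x; rewrite !inE => Px; rewrite ltnNge; apply/negP => jx.
    by move: nPj; rewrite (Pd x j jx Px).
  by move/subset_leq_card; rewrite card_lt leqNgt lt.
rewrite -(card_lt j); apply: proper_card; apply/properP; split.
  apply/subsetP => x; rewrite !inE => xj; apply: Pd Pj; exact: ltnW.
by exists j; rewrite !inE ?ltnn.
Qed.

Lemma sortfun m N (g : 'I_m -> 'I_N) : injective g ->
  exists R : 'I_m -> 'I_N, exists sg : 'I_m -> 'I_m,
  [/\ forall a b : 'I_m, a < b -> R a < R b,
      forall b : 'I_m, R (sg b) = g b,
      forall a : 'I_m, exists b, R a = g b &
      forall a b : 'I_m, g a < g b -> sg a < sg b].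
Proof.
move=> ginj; set A := [set g x | x in 'I_m].
have eA : #|A| = m by rewrite card_imset ?card_ord.
have ex b : exists i, @sen N A i == g b.
  have gA : g b \in A by apply/imsetP; exists b.
  by case: (@sen_surj N A (g b) gA) => i <-; exists i.
exists (fun a => @sen N A (cast_ord (esym eA) a)).
exists (fun b => cast_ord eA (xchoose (ex b))).
have Rsg b : @sen N A (cast_ord (esym eA) (cast_ord eA (xchoose (ex b)))) = g b.
  by rewrite cast_ordK; apply/eqP; exact: (xchooseP (ex b)).
split => //.
- by move=> a b ab; rewrite sen_lt.
- move=> a; case/imsetP: (@sen_in N A (cast_ord (esym eA) a)) => b _ E; by exists b.
- move=> a b gab; rewrite /= -(sen_lt (xchoose (ex a)) (xchoose (ex b))).
  by rewrite (eqP (xchooseP (ex a))) (eqP (xchooseP (ex b))).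
Qed.


Section Gen.
Variables (n : nat) (gd : 'S_n -> 'I_n -> 'I_n -> bool).
Definition key (s : 'S_n) :=
  ([set x : 'I_n * 'I_n | gd s x.1 x.2],
   [ffun c => if gd s c (s c) then None else Some (s c)]).
Variable s0 : 'S_n.
Definition Cs : {set 'I_n} := [set c | gd s0 c (s0 c)].
Definition Rs : {set 'I_n} := s0 @: Cs.
Lemma eR : #|Rs| = #|Cs|.
Proof. by rewrite card_imset //; apply: perm_inj. Qed.
Local Notation n0 := #|Cs|.
Definition cv (j : 'I_n0) : 'I_n := @sen n Cs j.
Definition rv (i : 'I_n0) : 'I_n := @sen n Rs (cast_ord (esym eR) i).
Definition L (i : 'I_n0) := #|[set j : 'I_n0 | gd s0 (cv j) (rv i)]|.
Definition lam := [seq L i | i <- enum 'I_n0].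
Definition Phi (s : 'S_n) : {set 'I_n0 * 'I_n0} := [set x | s (cv x.2) == rv x.1].
End Gen.
Arguments key {n} gd s.
Arguments Cs {n} gd s0.
Arguments Rs {n} gd s0.
Arguments eR {n} gd s0.
Arguments cv {n} gd s0 j.
Arguments rv {n} gd s0 i.
Arguments L {n} gd s0 i.
Arguments lam {n} gd s0.
Arguments Phi {n} gd s0 s.

Section Fiber.
Variables (q : rel nat) (k m n : nat).
Hypothesis Hq : is_pop k q.
Hypothesis mk : m < k.
Local Notation gd := (good q k m n).
Local Notation ky := (key gd).
Variable s0 : 'S_n.

Lemma key_good (s : 'S_n) : ky s = ky s0 -> forall c r, gd s c r = gd s0 c r.
Proof.
move=> E c r; case: E => /setP /(_ (c, r)); rewrite !inE /= => -> _ //.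
Qed.

Lemma key_in (s : 'S_n) : ky s = ky s0 -> forall c, gd s c (s c) = gd s0 c (s0 c).
Proof.
case=> _ E c; move/ffunP/(_ c): E; rewrite !ffunE.
by case: (gd s c (s c)); case: (gd s0 c (s0 c)).
Qed.

Lemma key_out (s : 'S_n) : ky s = ky s0 -> forall c, ~~ gd s0 c (s0 c) -> s c = s0 c.
Proof.
case=> _ E c /negbTE h; move/ffunP/(_ c): E; rewrite !ffunE h.
by case: ifP => // _ [].
Qed.

Lemma compat_key (s : 'S_n) : (forall c, ~~ gd s0 c (s0 c) -> s c = s0 c) ->
  (forall c, gd s0 c (s0 c) -> gd s0 c (s c)) -> ky s = ky s0.
Proof.
move=> H1 H2; have St := stab Hq mk H1 H2; rewrite /key; congr pair.
  by apply/setP => x; rewrite !inE St.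
apply/ffunP => c; rewrite !ffunE St; case: (boolP (gd s0 c (s0 c))) => h.
  by rewrite (H2 _ h).
by rewrite (H1 _ h) (negbTE h).
Qed.

Local Notation Cs := (Cs gd s0).
Local Notation Rs := (Rs gd s0).
Local Notation eR := (eR gd s0).
Local Notation n0 := #|Cs|.
Local Notation cv := (cv gd s0).
Local Notation rv := (rv gd s0).
Local Notation L := (L gd s0).
Local Notation lam := (lam gd s0).
Local Notation Phi := (Phi gd s0).

Lemma Rs_mem c : (s0 c \in Rs) = (c \in Cs).
Proof. by rewrite mem_imset //; apply: perm_inj. Qed.
Lemma cv_in j : cv j \in Cs. Proof. exact: sen_in. Qed.
Lemma rv_in i : rv i \in Rs. Proof. exact: sen_in. Qed.
Lemma cv_lt i j : (cv i < cv j) = (i < j). Proof. exact: sen_lt. Qed.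
Lemma rv_lt i j : (rv i < rv j) = (i < j). Proof. by rewrite /rv sen_lt. Qed.
Lemma cv_le i j : (cv i <= cv j) = (i <= j). Proof. exact: sen_le. Qed.
Lemma rv_le i j : (rv i <= rv j) = (i <= j). Proof. by rewrite /rv sen_le. Qed.
Lemma cv_inj : injective cv. Proof. exact: sen_inj. Qed.
Lemma rv_inj : injective rv.
Proof. by move=> i j /sen_inj /(congr1 val) /= E; apply: val_inj. Qed.
Lemma cv_surj x : x \in Cs -> exists j, cv j = x. Proof. exact: sen_surj. Qed.
Lemma rv_surj x : x \in Rs -> exists i, rv i = x.
Proof.
case/sen_surj => i <-; exists (cast_ord eR i); rewrite /rv; congr sen.
exact: val_inj.
Qed.


Lemma nth_lam (i : 'I_n0) : nth 0 lam i = L i.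
Proof. by rewrite /lam (nth_map i) ?nth_ord_enum // size_enum_ord. Qed.

Lemma board (i j : 'I_n0) : in_board lam i j = gd s0 (cv j) (rv i).
Proof.
rewrite /in_board nth_lam /L initseg // => x y yx gx.
by apply: good_down gx _ (leqnn _); rewrite cv_le.
Qed.

Lemma lam_ferrers : ferrers n0 lam.
Proof.
split.
- by rewrite size_map size_enum_ord.
- apply/(sortedP 0) => i; rewrite size_map size_enum_ord => iS.
  have i0 : i < n0 by apply: ltnW.
  have := nth_lam (Ordinal i0); have := nth_lam (Ordinal iS); rewrite /= => -> ->.
  apply: subset_leq_card; apply/subsetP => j; rewrite !inE => gj.
  by apply: good_down gj (leqnn _) _; rewrite rv_le /=.
- apply/allP => x /mapP [i _ ->]; rewrite /L card_gt0; apply/set0Pn.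
  case/imsetP: (rv_in i) => c cC E; case: (cv_surj cC) => j cj.
  by exists j; rewrite inE cj E; move: cC; rewrite inE.
- case: (posnP n0) => [E|pos].
    by rewrite nth_default // size_map size_enum_ord E.
  have := nth_lam (Ordinal pos); rewrite /= => ->; rewrite /L.
  have -> : [set j : 'I_n0 | gd s0 (cv j) (rv (Ordinal pos))] = setT.
    apply/setP => j; rewrite !inE.
    have : s0 (cv j) \in Rs by rewrite Rs_mem cv_in.
    case/rv_surj => i Ei.
    have := cv_in j; rewrite inE -Ei => gj.
    by apply: good_down gj (leqnn _) _; rewrite rv_le.
  by rewrite cardsT card_ord.
Qed.


Section InFiber.
Variable s : 'S_n.
Hypothesis ks : ky s = ky s0.

Lemma F3 c : c \in Cs -> s c \in Rs.
Proof.
move=> cC; apply/negPn/negP => nR.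
set c' := (s0^-1)%g (s c).
have E : s0 c' = s c by rewrite /c' permKV.
have c'C : c' \notin Cs by rewrite -Rs_mem E.
have : s c' = s0 c' by apply: key_out => //; move: c'C; rewrite inE.
rewrite E => /perm_inj Ec; move: c'C; by rewrite Ec cC.
Qed.

Lemma F4 c : c \in Cs -> gd s0 c (s c).
Proof. by move=> cC; rewrite -(key_good ks) (key_in ks); move: cC; rewrite inE. Qed.

Lemma Phi_trans : Defs.transversal lam (Phi s).
Proof.
apply/and3P; split.
- apply/forallP => [[i j]]; apply/implyP; rewrite inE /= => /eqP E.
  by rewrite board -E F4 // cv_in.
- apply/forallP => i; apply/cards1P.
  set c := (s^-1)%g (rv i).
  have Ec : s c = rv i by rewrite /c permKV.
  have cC : c \in Cs.
    apply/negPn/negP => nC.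
    have := rv_in i; rewrite -Ec key_out //; last by move: nC; rewrite inE.
    by rewrite Rs_mem (negbTE nC).
  case: (cv_surj cC) => j Ej; exists j; apply/setP => x; rewrite !inE /=.
  rewrite -Ec -Ej; apply/eqP/eqP => [/perm_inj /cv_inj //|->//].
- apply/forallP => j; apply/cards1P.
  case: (rv_surj (F3 (cv_in j))) => i Ei; exists i; apply/setP => x; rewrite !inE /=.
  by rewrite -Ei; apply/eqP/eqP => [/rv_inj //|->].
Qed.

End InFiber.

Lemma Phi_inj (s s' : 'S_n) : ky s = ky s0 -> ky s' = ky s0 -> Phi s = Phi s' -> s = s'.
Proof.
move=> ks ks' E; apply/permP => c.
case: (boolP (c \in Cs)) => cC.
  case: (cv_surj cC) => j <-; case: (rv_surj (F3 ks (cv_in j))) => i Ei.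
  have : (i, j) \in Phi s by rewrite inE /= Ei.
  by rewrite E inE /= Ei => /eqP.
have nc : ~~ gd s0 c (s0 c) by move: cC; rewrite inE.
by rewrite !key_out.
Qed.

Lemma Phi_surj (T : {set 'I_n0 * 'I_n0}) : Defs.transversal lam T ->
  exists2 s, ky s = ky s0 & Phi s = T.
Proof.
case: (posnP n0) => [E|pos] Ttr.
  exists s0 => //; apply/setP => [[i j]]; have := ltn_ord i; by rewrite {2}E.
set j0 : 'I_n0 := Ordinal pos.
case/and3P: Ttr => Tb Trow Tcol.
pose rowT (j : 'I_n0) : 'I_n0 := odflt j0 [pick i | (i, j) \in T].
have rowTP j : (rowT j, j) \in T.
  rewrite /rowT; case: pickP => [i //| none].
  move: Tcol => /forallP /(_ j) /cards1P [i E].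
  have : i \in [set r | (r, j) \in T] by rewrite E set11.
  by rewrite inE none.
have rowTu j i : (i, j) \in T -> i = rowT j.
  move=> h; move: Tcol => /forallP /(_ j) /cards1P [i1 E].
  have : i \in [set r | (r, j) \in T] by rewrite inE.
  have : rowT j \in [set r | (r, j) \in T] by rewrite inE.
  by rewrite E !inE => /eqP -> /eqP.
have colu i j j' : (i, j) \in T -> (i, j') \in T -> j = j'.
  move=> h h'; move: Trow => /forallP /(_ i) /cards1P [i1 E].
  have : j \in [set c | (i, c) \in T] by rewrite inE.
  have : j' \in [set c | (i, c) \in T] by rewrite inE.
  by rewrite E !inE => /eqP -> /eqP.
pose colinv (c : 'I_n) : 'I_n0 := odflt j0 [pick j | cv j == c].
have colinvK j : colinv (cv j) = j.
  rewrite /colinv; case: pickP => [j' /eqP /cv_inj //| none].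
  by have := none j; rewrite eqxx.
pose g (c : 'I_n) : 'I_n := if c \in Cs then rv (rowT (colinv c)) else s0 c.
have ginj : injective g.
  move=> c c'; rewrite /g.
  case: (boolP (c \in Cs)) => cC; case: (boolP (c' \in Cs)) => c'C.
  - case: (cv_surj cC) => j <-; case: (cv_surj c'C) => j' <-.
    rewrite !colinvK => /rv_inj E.
    have h := rowTP j; have h' := rowTP j'; rewrite E in h.
    by rewrite (colu _ _ _ h h').
  - by move=> E; have := rv_in (rowT (colinv c)); rewrite E Rs_mem (negbTE c'C).
  - by move=> E; have := rv_in (rowT (colinv c')); rewrite -E Rs_mem (negbTE cC).
  - exact: perm_inj.
exists (perm ginj).
  apply: compat_key => c; rewrite permE /g.
    by move=> h; rewrite ifN // inE.
  move=> h; have cC : c \in Cs by rewrite inE.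
  rewrite cC; case: (cv_surj cC) => j <-; rewrite colinvK -board.
  by move: Tb => /forallP /(_ (rowT j, j)) /implyP /(_ (rowTP j)).
apply/setP => [[i j]]; rewrite inE /= permE /g cv_in colinvK.
apply/eqP/idP => [/rv_inj <- //|h]; by rewrite -(rowTu _ _ h).
Qed.

Hypothesis m0 : 0 < m.
Hypothesis cross : forall y x, 1 <= y <= m -> m < x <= k -> ~~ isolated k q x -> q y x.

Lemma contains_eq (s : 'S_n) : ky s = ky s0 ->
  perm_contains k q s = @trans_contains m n0 lam (restrict q m) (Phi s).
Proof.
move=> ks; apply/idP/idP.
- case/existsP => f /andP [/forallP F1 /forallP F2].
  have F1' (a b : 'I_k) : a < b -> f a < f b by move=> h; move: (F1 a) => /forallP /(_ b) /implyP; apply.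
  have F2' (a b : 'I_k) : q a.+1 b.+1 -> s (f a) < s (f b) by move=> h; move: (F2 a) => /forallP /(_ b) /implyP; apply.
  have finj : injective f.
    move=> x y E; case: (ltngtP x y) => [xy|yx|/val_inj //].
      by have := F1' _ _ xy; rewrite E ltnn.
    by have := F1' _ _ yx; rewrite E ltnn.
  pose wd (a : 'I_m) : 'I_k := widen_ord (ltnW mk) a.
  have G a b : gd s0 (f (wd a)) (s (f (wd b))).
    rewrite -(key_good ks); apply/existsP; exists f; apply/and4P; split.
    + apply/forallP => x; apply/forallP => y; apply/implyP => /andP [_ xy]; exact: F1'.
    + apply/forallP => x; apply/implyP => mx; apply: F1'; exact: leq_trans (ltn_ord a) mx.
    + apply/forallP => x; apply/forallP => y; apply/implyP => /and3P [_ _ qxy]; exact: F2'.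
    + apply/forallP => x; apply/implyP => /andP [mx nx]; apply: F2'; apply: cross => //.
        by rewrite /= ltn_ord.
      by rewrite ltnS mx ltn_ord.
  have inC a : f (wd a) \in Cs by rewrite inE -(key_in ks) (key_good ks) G.
  have exC a : exists j, cv j == f (wd a) by case: (cv_surj (inC a)) => j <-; exists j.
  have exR a : exists i, rv i == s (f (wd a)) by case: (rv_surj (F3 ks (inC a))) => i <-; exists i.
  pose C a := xchoose (exC a); pose row a := xchoose (exR a).
  have CE a : cv (C a) = f (wd a) := eqP (xchooseP (exC a)).
  have RE a : rv (row a) = s (f (wd a)) := eqP (xchooseP (exR a)).
  have rinj : injective row.
    move=> a b E; have := congr1 rv E; rewrite !RE => /perm_inj /finj /(congr1 val) /= E'.
    exact: val_inj.
  case: (sortfun rinj) => R [sg [R1 R2 R3 R4]].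
  apply/existsP; exists [ffun a => R a]; apply/existsP; exists [ffun a => C a].
  apply/existsP; exists [ffun a => sg a].
  apply/and5P; split.
  + apply/forallP => a; apply/forallP => b; rewrite !ffunE; apply/implyP; exact: R1.
  + apply/forallP => a; apply/forallP => b; rewrite !ffunE; apply/implyP => ab.
    by rewrite -cv_lt !CE; apply: F1'.
  + apply/forallP => a; apply/forallP => b; rewrite !ffunE board.
    by case: (R3 a) => b' ->; rewrite RE CE.
  + apply/forallP => b; rewrite !ffunE inE /= R2 RE CE.
    by [].
  + apply/forallP => a; apply/forallP => b; rewrite !ffunE; apply/implyP => /and3P [qab _ _].
    by apply: R4; rewrite -rv_lt !RE; apply: F2'.
- case/existsP => R /existsP [C /existsP [sg /and5P [T1 T2 T3 T4 T5]]].
  have T1' (a b : 'I_m) : a < b -> R a < R b by move=> h; move: (T1) => /forallP /(_ a) /forallP /(_ b) /implyP; apply.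
  have T2' (a b : 'I_m) : a < b -> C a < C b by move=> h; move: (T2) => /forallP /(_ a) /forallP /(_ b) /implyP; apply.
  have T1w (a b : 'I_m) : a <= b -> R a <= R b.
    by rewrite leq_eqVlt => /orP [/eqP /val_inj -> //| /T1' /ltnW].
  have T2w (a b : 'I_m) : a <= b -> C a <= C b.
    by rewrite leq_eqVlt => /orP [/eqP /val_inj -> //| /T2' /ltnW].
  have mm : m.-1 < m by rewrite ltn_predL.
  pose amax : 'I_m := Ordinal mm.
  have amaxP (a : 'I_m) : a <= amax by rewrite /= -ltnS prednK.
  have VE b : s (cv (C b)) = rv (R (sg b)).
    by move: (T4) => /forallP /(_ b); rewrite inE /= => /eqP.
  have := T3; move=> /forallP /(_ amax) /forallP /(_ amax); rewrite board -(key_good ks).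
  case/existsP => f /and4P [W1 W2 W3 W4].
  have IV (x : nat) : x < m -> val (insubd amax x) = x by move=> h; rewrite val_insubd h.
  pose h := [ffun x : 'I_k => if x < m then cv (C (insubd amax (val x))) else f x].
  apply/existsP; exists h; apply/andP; split.
  + apply/forallP => x; apply/forallP => y; apply/implyP => xy; rewrite !ffunE.
    case: ifP => xm; case: ifP => ym.
    * by rewrite cv_lt; apply: T2'; rewrite !IV.
    * apply: leq_ltn_trans (_ : cv (C amax) < f y).
        by rewrite cv_le; apply: T2w.
      by move: W2 => /forallP /(_ y); rewrite leqNgt ym.
    * by move: (ltn_trans xy ym); rewrite xm.
    * by move: W1 => /forallP /(_ x) /forallP /(_ y); rewrite leqNgt xm xy.
  + apply/forallP => x; apply/forallP => y; apply/implyP => qxy; rewrite !ffunE.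
    case: ifP => xm; case: ifP => ym.
    * rewrite !VE rv_lt; apply: T1'.
      move: T5 => /forallP /(_ (insubd amax (val x))) /forallP /(_ (insubd amax (val y))).
      by rewrite /restrict !IV // qxy xm ym; apply.
    * apply: leq_ltn_trans (_ : rv (R amax) < s (f y)).
        by rewrite VE rv_le; apply: T1w.
      by move: W4 => /forallP /(_ y); rewrite leqNgt ym (nonisoR Hq qxy).
    * exfalso; case: (Hq) => _ irr tr.
      have qyx : q y.+1 x.+1.
        apply: cross; first by apply/andP; split.
          by rewrite ltnS (leqNgt m) xm ltn_ord.
        exact: (nonisoL Hq qxy).
      by have := tr _ _ _ qxy qyx; rewrite (negbTE (irr _)).
    * by move: W3 => /forallP /(_ x) /forallP /(_ y); rewrite (leqNgt m x) (leqNgt m y) xm ym qxy.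
Qed.

Lemma fiber_count :
  #|[set s : 'S_n | (ky s == ky s0) && ~~ perm_contains k q s]| =
  trans_avoid_count m n0 lam (restrict q m).
Proof.
rewrite /trans_avoid_count -(@card_in_imset _ _ Phi); last first.
  move=> s s'; rewrite !inE => /andP [/eqP ks _] /andP [/eqP ks' _].
  exact: Phi_inj.
apply: eq_card => T; rewrite inE; apply/imsetP/idP.
  case=> s; rewrite inE => /andP [/eqP ks nc] ->.
  by rewrite Phi_trans // -contains_eq.
case/andP => tT nc; case: (Phi_surj tT) => s ks E.
by exists s => //; rewrite inE ks eqxx /= contains_eq // E.
Qed.

End Fiber.

Definition rep n (gd : 'S_n -> 'I_n -> 'I_n -> bool)
  (K : ({set 'I_n * 'I_n} * {ffun 'I_n -> option 'I_n})%type) : 'S_n :=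
  odflt 1%g [pick s | key gd s == K].

Lemma count_formula q k m n (Hq : is_pop k q) (mk : m < k) (m0 : 0 < m)
  (cross : forall y x, 1 <= y <= m -> m < x <= k -> ~~ isolated k q x -> q y x) :
  perm_avoid_count k n q =
  \sum_(K in [set key (good q k m n) s | s : 'S_n])
     trans_avoid_count m #|Cs (good q k m n) (rep (good q k m n) K)|
        (lam (good q k m n) (rep (good q k m n) K)) (restrict q m).
Proof.
rewrite /perm_avoid_count -sum1_card.
rewrite (partition_big (key (good q k m n)) (mem [set key (good q k m n) s | s : 'S_n])) /=;
  last by move=> s _; apply: imset_f.
apply: eq_bigr => K /imsetP [s1 _ EK].
have ek : key (good q k m n) (rep (good q k m n) K) = K.
  rewrite /rep; case: pickP => [s /eqP //|none].
  by have := none s1; rewrite EK eqxx.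
rewrite -(fiber_count Hq mk _ m0 cross) sum1dep_card; apply: eq_card => s.
by rewrite !inE ek andbC.
Qed.

Theorem theorem1p2 (k : nat) (p p' : rel nat) (i1 : nat) :
  is_pop k p -> is_pop k p' ->
  (* same set I of isolated vertices *)
  (forall x, 1 <= x <= k -> isolated k p x = isolated k p' x) ->
  (* I nonempty, with least element i1 *)
  1 <= i1 <= k -> isolated k p i1 ->
  (forall x, 1 <= x < i1 -> ~~ isolated k p x) ->
  (* y < x for x in [i1,k] \ I and y in [i1 - 1] *)
  (forall x y, i1 <= x <= k -> ~~ isolated k p x -> 1 <= y <= i1.-1 ->
     p y x /\ p' y x) ->
  (* I_p ~s I_p' *)
  shape_wilf_equiv i1.-1 (restrict p i1.-1) (restrict p' i1.-1) ->
  (* J_p = J_p' *)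
  (forall x y, i1 <= x <= k -> ~~ isolated k p x ->
               i1 <= y <= k -> ~~ isolated k p y -> p x y = p' x y) ->
  wilf_equiv k p p'.
Proof.
move=> Hp Hp' Iso /andP [i1pos i1k] _ _ crs shape J n _.
have rngp x y : p x y -> (1 <= x <= k) && (1 <= y <= k) by case: Hp => h _ _; apply: h.
have rngp' x y : p' x y -> (1 <= x <= k) && (1 <= y <= k) by case: Hp' => h _ _; apply: h.
have Iso' x : 1 <= x <= k -> ~~ isolated k p x = ~~ isolated k p' x by move=> h; rewrite Iso.
have Epp x y : i1 <= x -> i1 <= y -> p x y = p' x y.
  move=> ix iy; apply/idP/idP => h.
    have /andP [/andP [x1 xk] /andP [y1 yk]] := rngp _ _ h.
    by rewrite -J ?ix ?iy ?xk ?yk // ?(nonisoL Hp h) ?(nonisoR Hp h).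
  have /andP [/andP [x1 xk] /andP [y1 yk]] := rngp' _ _ h.
  rewrite J ?ix ?iy ?xk ?yk //.
    by rewrite Iso' ?x1 ?xk // (nonisoL Hp' h).
  by rewrite Iso' ?y1 ?yk // (nonisoR Hp' h).
case: (posnP i1.-1) => [m0|m0].
  have i11 : i1 = 1 by rewrite -(prednK i1pos) m0.
  have -> : p = p'.
    apply: functional_extensionality => x; apply: functional_extensionality => y.
    case: (boolP (p x y)) => h.
      have /andP [/andP [x1 _] /andP [y1 _]] := rngp _ _ h.
      by rewrite -Epp ?i11.
    case: (boolP (p' x y)) => h' //.
    have /andP [/andP [x1 _] /andP [y1 _]] := rngp' _ _ h'.
    by move: h; rewrite Epp ?i11 // h'.
  by [].
set m := i1.-1 in m0 crs shape.
have mi1 : m.+1 = i1 by rewrite /m prednK.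
have mk : m < k by rewrite mi1.
have crossp y x : 1 <= y <= m -> m < x <= k -> ~~ isolated k p x -> p y x.
  move=> hy /andP [mx xk] nx; case: (crs x y) => //.
  by rewrite -mi1 mx xk.
have crossp' y x : 1 <= y <= m -> m < x <= k -> ~~ isolated k p' x -> p' y x.
  move=> hy /andP [mx xk] nx; case: (crs x y) => //.
    by rewrite -mi1 mx xk.
  by rewrite Iso' // (leq_ltn_trans _ mx) // mx xk.
have E : good p k m n = good p' k m n.
  apply: functional_extensionality => s; apply: functional_extensionality => c.
  apply: functional_extensionality => r.
  rewrite /good; apply: eq_existsb => f; rewrite /W; congr [&& _, _, _ & _].
    apply: eq_forallb => a; apply: eq_forallb => b.
    case ma: (m <= a); case mb: (m <= b) => //=.
    by rewrite Epp // -mi1 ltnS.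
  apply: eq_forallb => a; case ma: (m <= a) => //=.
  by rewrite Iso' // ltn_ord.
rewrite (@count_formula p k m n Hp mk m0 crossp) (@count_formula p' k m n Hp' mk m0 crossp') -E.
apply: eq_bigr => K _; apply: shape; exact: lam_ferrers.
Qed.
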